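(* Let $F$ be an infinite field of characteristic different from $2$, let $S$ be an étale $F$-algebra with an involution $\sigma$, let $S_0=S^\sigma$, and suppose $\dim_F S=2n$ (so $\dim_FS_0=n$). Then: (1) there exists an invertible element $x\in S$ such that $x$ generates $S$ as an $F$-algebra and $x^2$ generates $S_0$; (2) there exists a polynomial $f_n(x)=x^n+a_{n-1}x^{n-1}+\dots+a_1x+a_0\in F[x]$ such that $S_0\cong F[x]/(f_n(x))$ and $S\cong F[x]/(f_{2n}(x))$, where $f_{2n}(x)=f_n(x^2)$; (3) for such a polynomial $f_n$, the algebra $S$ has trivial discriminant if and only if $(-1)^na_0$ is a square in $F$.
   Context: An étale $F$-algebra is a finite-dimensional commutative $F$-algebra $S$ with $S\otimes_FF_s\cong F_s^m$ for a separable closure $F_s$. An involution of $S$ is an $F$-algebra automorphism $\sigma$ of order $2$ such that the inclusion $S^\sigma\subset S$ of the fixed subalgebra makes $S$ a quadratic étale extension (free of rank $2$) of $S^\sigma$. The discriminant $\Delta(S)$ is the quadratic étale $F$-algebra corresponding to the two-element $\Gamma$-set of $\mathfrak A_{2n}$-orbits of orderings of $\mathrm{Hom}_{F\text{-alg}}(S,F_s)$; $S$ has trivial discriminant if $\Delta(S)\cong F\times F$ (equivalently, in characteristic $\ne2$, the usual discriminant is a square). *)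

(* Defs.v *)
From HB Require Import structures.
From mathcomp Require Import all_boot all_order all_algebra all_field.
Set Implicit Arguments. Unset Strict Implicit. Unset Printing Implicit Defensive.
Import GRing.Theory.
Local Open Scope ring_scope.

Section EtaleDefs.
Variable F : fieldType.

Definition aeval (S : falgType F) (p : {poly F}) (y : S) : S :=
  (map_poly (in_alg S) p).[y].

Definition falg_hom (S : falgType F) (K : fieldType) (iota : {rmorphism F -> K})
    (phi : S -> K) : Prop :=
  [/\ forall a b : S, phi (a + b) = phi a + phi b,
      forall a b : S, phi (a * b) = phi a * phi b,
      phi 1 = 1 &
      forall (c : F) (a : S), phi (c *: a) = iota c * phi a].

(* Etale F-algebra: finite-dimensional commutative F-algebra S such that
   S (x)_F K ~= K^m (m = dim S) as K-algebras for a field extension K of F.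
   A K-algebra map S (x)_F K -> K^m is the same as m F-algebra maps
   phi_i : S -> K, and it is an isomorphism iff the matrix (phi_i(e_j))
   (e a basis of S) is invertible. *)
Definition etale (S : falgType F) : Prop :=
  (forall a b : S, a * b = b * a) /\
  exists (K : fieldType) (iota : {rmorphism F -> K})
         (phi : 'I_(\dim {:S}) -> S -> K),
    (forall i, falg_hom iota (phi i)) /\
    \det (\matrix_(i, j) phi i (vbasis {:S})`_j) != 0.

(* Involution: F-algebra automorphism of order 2 such that S is free of rank 2
   over the fixed subalgebra S^sigma. *)
Definition involution (S : falgType F) (sigma : 'AEnd(S)) : Prop :=
  [/\ forall x : S, sigma (sigma x) = x,
      exists x : S, sigma x != x &
      exists u v : S,
        (forall s : S, exists a b : S,
            [/\ a \in fixedSpace sigma, b \in fixedSpace sigma & s = a * u + b * v]) /\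
        (forall a b : S, a \in fixedSpace sigma -> b \in fixedSpace sigma ->
            a * u + b * v = 0 -> a = 0 /\ b = 0)].

(* U (a subalgebra of S) is isomorphic, as an F-algebra, to F[x]/(f):
   there is y in U such that p |-> p(y) maps F[x] onto U with kernel (f). *)
Definition iso_poly_quot (S : falgType F) (U : {vspace S}) (f : {poly F}) : Prop :=
  exists y : S, [/\ y \in U,
    forall p : {poly F}, aeval p y = 0 <-> f %| p &
    forall s : S, s \in U -> exists p : {poly F}, aeval p y = s].

Definition trace_alg (S : falgType F) (s : S) : F :=
  \sum_(i < \dim {:S}) coord (vbasis {:S}) i (s * (vbasis {:S})`_i).

Definition trace_disc (S : falgType F) : F :=
  \det (\matrix_(i < \dim {:S}, j < \dim {:S})
          trace_alg ((vbasis {:S})`_i * (vbasis {:S})`_j)).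

Definition trivial_discriminant (S : falgType F) : Prop :=
  exists c : F, trace_disc S = c ^+ 2.

End EtaleDefs.

(* Main.v *)
Require Import Defs.
From HB Require Import structures.
From mathcomp Require Import all_boot all_order all_algebra all_field.
From mathcomp Require Import ring zify.
Set Implicit Arguments. Unset Strict Implicit. Unset Printing Implicit Defensive.
Import GRing.Theory.
Local Open Scope ring_scope.

Section Gen.
Variable F : fieldType.
Variable S : falgType F.

Definition indep N (b : 'I_N -> S) :=
  forall c : 'I_N -> F, \sum_i c i *: b i = 0 -> forall i, c i = 0.

Lemma aeval_alg (p : {poly F}) (y : S) : aeval p y = horner_alg y p.
Proof. by []. Qed.

Lemma aeval_wide N (p : {poly F}) (y : S) : (size p <= N)%N ->
  aeval p y = \sum_(i < N) p`_i *: y ^+ i.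
Proof.
move=> hp; rewrite /aeval (@horner_coef_wide _ N); last first.
  by apply: leq_trans hp; exact: size_poly.
by apply: eq_bigr => i _; rewrite coef_map /= mulr_algl.
Qed.

Lemma aeval_comp (p q : {poly F}) (y : S) :
  aeval (p \Po q) y = aeval p (aeval q y).
Proof.
rewrite [RHS](aeval_wide (N:=size p)) // aeval_alg comp_polyE linear_sum /=.
by apply: eq_bigr => i _; rewrite linearZ /= rmorphXn mulr_algl.
Qed.

Lemma aevalX (y : S) : aeval 'X y = y.
Proof. by rewrite aeval_alg horner_algX. Qed.

Lemma aevalXn (y : S) k : aeval 'X^k y = y ^+ k.
Proof. by rewrite aeval_alg rmorphXn /= horner_algX. Qed.

Lemma tuple_free N (b : 'I_N -> S) : indep b -> free [tuple b i | i < N].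
Proof.
move=> hb; apply/freeP => k hk i; apply: (hb k _ i).
rewrite -[RHS]hk; apply: eq_bigr => j _; by rewrite -tnth_nth tnth_mktuple.
Qed.

Lemma indep_dim N (b : 'I_N -> S) (U : {vspace S}) :
  (forall i, b i \in U) -> indep b -> (N <= \dim U)%N.
Proof.
move=> hU hb; have /eqnP hf := tuple_free hb.
rewrite size_tuple in hf; rewrite -hf; apply: dimvS.
by apply/span_subvP => s /mapP [i _ ->]; apply: hU.
Qed.

Lemma indep_span N (b : 'I_N -> S) (U : {vspace S}) :
  (forall i, b i \in U) -> (\dim U <= N)%N -> indep b ->
  forall s, s \in U -> exists c : 'I_N -> F, s = \sum_i c i *: b i.
Proof.
move=> hU hd hb s hs.
have hB : basis_of U [tuple b i | i < N].
  rewrite basisEfree tuple_free // size_tuple hd andbT.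
  by apply/span_subvP => t /mapP [i _ ->]; apply: hU.
exists (fun i => coord [tuple b i | i < N] i s).
rewrite {1}(coord_basis hB hs); apply: eq_bigr => i _.
by rewrite -tnth_nth tnth_mktuple.
Qed.


Definition nokill (y : S) N :=
  forall P : {poly F}, (size P <= N)%N -> aeval P y = 0 -> P = 0.

Lemma aeval_sumXn M (c : 'I_M -> F) (g : 'I_M -> nat) (y : S) :
  aeval (\sum_i c i *: 'X^(g i)) y = \sum_i c i *: y ^+ g i.
Proof.
rewrite aeval_alg linear_sum; apply: eq_bigr => i _.
by rewrite linearZ /= rmorphXn /= horner_algX mulr_algl.
Qed.

Lemma nokill_indep (y : S) N : nokill y N ->
  forall M (g : 'I_M -> nat), injective g -> (forall i, g i < N)%N ->
  indep (fun i => y ^+ g i).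
Proof.
move=> hk M g gi gN c hc.
pose P := \sum_i c i *: 'X^(g i) : {poly F}.
have hP : P = 0.
  apply: hk; last by rewrite aeval_sumXn.
  apply/leq_sizeP => j hj; rewrite coef_sumMXn big1 // => i /eqP hi.
  by move: (gN i); rewrite hi ltnNge hj.
move=> i; have : P`_(g i) = 0 by rewrite hP coef0.
rewrite coef_sumMXn (bigD1 i) //= big1 ?addr0 // => k /andP [/eqP hg hki].
by move: hki; rewrite (gi _ _ hg) eqxx.
Qed.

Lemma indep_nokill (y : S) N : indep (fun j : 'I_N => y ^+ j) -> nokill y N.
Proof.
move=> hb P hP hz; apply/polyP => j; rewrite coef0.
case: (ltnP j N) => hj; last by move/leq_sizeP: hP; apply.
have := hb (fun i => P`_i) _ (Ordinal hj); apply.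
by rewrite -(aeval_wide _ hP).
Qed.

Lemma nokill_sq (y : S) N : nokill y (N.*2) -> nokill (y ^+ 2) N.
Proof.
move=> hk P hP hz.
have h2 : P \Po 'X^2 = 0.
  apply: hk; last by rewrite aeval_comp aevalXn.
  apply/leq_sizeP => j hj; rewrite coef_comp_poly_Xn //.
  case: ifP => // /dvdnP [k hk']; subst j; apply/(leq_sizeP _ _ hP).
  by rewrite mulnK //; rewrite -muln2 leq_pmul2r in hj.
apply/polyP => i; rewrite coef0.
have := coef_comp_poly_Xn P (i * 2) (isT : (0 < 2)%N).
by rewrite dvdn_mull // mulnK // h2 coef0.
Qed.

Lemma kernel_char (y : S) (f : {poly F}) : f != 0 -> aeval f y = 0 ->
  nokill y (size f).-1 -> forall p, aeval p y = 0 <-> f %| p.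
Proof.
move=> f0 hf hk p; split => [hp | ]; last first.
  by rewrite dvdp_eq => /eqP ->; rewrite !aeval_alg rmorphM /= -!aeval_alg hf mulr0.
apply/modp_eq0P; apply: hk.
  by rewrite -ltnS prednK ?size_poly_gt0 // ltn_modp.
move: hp; rewrite {1}(divp_eq p f) !aeval_alg rmorphD rmorphM /=.
by rewrite -!aeval_alg hf mulr0 add0r.
Qed.

End Gen.

Section Gen2.
Variable F : fieldType.
Variable S : falgType F.
Hypothesis Hc : forall a b : S, a * b = b * a.

Lemma lreg_unit (x : S) : (forall s, x * s = 0 -> s = 0) -> x \is a GRing.unit.
Proof.
move=> hx.
have hk : lker (amull x) == 0%VS.
  apply/lker0P => a b; rewrite !lfunE /= => hab; apply/eqP; rewrite -subr_eq0.
  by apply/eqP/hx; rewrite mulrBr hab subrr.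
have : (1 : S) \in limg (amull x) by rewrite lker0_limgf ?memvf.
case/memv_imgP => s _; rewrite lfunE /= => h1.
by apply/unitrP; exists s; rewrite Hc -h1.
Qed.

Lemma memv_X (A : {aspace S}) (a : S) k : 1 \in A -> a \in A -> a ^+ k \in A.
Proof.
move=> h1 ha; elim: k => [|k ih]; first by rewrite expr0.
by rewrite exprS memvM.
Qed.

Lemma size_sumXn N M (c : 'I_M -> F) (g : 'I_M -> nat) :
  (forall i, g i < N)%N -> (size ((\sum_i c i *: 'X^(g i))%R : {poly F}) <= N)%N.
Proof.
move=> gN; apply/leq_sizeP => j hj; rewrite coef_sumMXn big1 // => i /eqP hi.
by move: (gN i); rewrite hi ltnNge hj.
Qed.

Lemma size_comp_sq (f : {poly F}) : f \is monic ->
  size (f \Po 'X^2) = ((size f).-1 * 2).+1.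
Proof.
move=> hm.
have hc : (f \Po 'X^2)`_((size f).-1 * 2) = 1.
  rewrite coef_comp_poly_Xn // dvdn_mull // mulnK //.
  by move/monicP: hm; rewrite lead_coefE.
have hn : f \Po 'X^2 != 0.
  by apply/eqP => h0; move: hc; rewrite h0 coef0 => /eqP; rewrite eq_sym oner_eq0.
have := size_comp_poly f 'X^2; rewrite size_polyXn /= => <-.
by rewrite prednK // size_poly_gt0.
Qed.

Variables (K : fieldType) (iota : {rmorphism F -> K}).
Hypothesis Hinf : forall s : seq F, exists x : F, x \notin s.

Lemma big_list N : exists L : seq F, uniq L /\ size L = N.
Proof.
elim: N => [|N [L [hu hs]]]; first by exists [::].
have [x hx] := Hinf L; exists (x :: L); by rewrite /= hx hu hs.
Qed.

Lemma pick_good (J : eqType) (A B : J -> K) (gs : seq J) (L : seq F) :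
  uniq L -> (size gs < size L)%N ->
  (forall j, j \in gs -> (A j != 0) || (B j != 0)) ->
  exists2 c, c \in L & forall j, j \in gs -> A j + iota c * B j != 0.
Proof.
elim: gs L => [|j gs ih] L hu hs hab.
  by case: L hu hs => // c L _ _; exists c; rewrite ?inE ?eqxx.
have habj := hab j (mem_head _ _).
have hab' : forall j', j' \in gs -> (A j' != 0) || (B j' != 0).
  by move=> j' hj'; apply: hab; rewrite inE hj' orbT.
case: (boolP (has (fun c => A j + iota c * B j == 0) L)) => [/hasP [c0 hc0 /eqP hz] | /hasPn hn].
  have hu' : uniq (rem c0 L) by apply: rem_uniq.
  have hs' : (size gs < size (rem c0 L))%N.
    by rewrite size_rem //; move: hs => /=; case: (size L).
  have [c hc hcg] := ih _ hu' hs' hab'.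
  exists c; first by move: hc; rewrite mem_rem_uniq // inE => /andP [].
  move=> j'; rewrite inE => /orP [/eqP -> | hj']; last by apply: hcg.
  move: hc; rewrite mem_rem_uniq // inE => /andP [hcc0 _].
  apply/eqP => hz'.
  have hB : B j = 0.
    have : (iota c - iota c0) * B j = 0.
      have -> : (iota c - iota c0) * B j = (A j + iota c * B j) - (A j + iota c0 * B j) by ring.
      by rewrite hz hz' subrr.
    by move/eqP; rewrite mulf_eq0 subr_eq0 (inj_eq (fmorph_inj iota)) (negPf hcc0) /= => /eqP.
  have hA : A j = 0 by move: hz'; rewrite hB mulr0 addr0.
  by move: habj; rewrite hA hB eqxx.
have [c hc hcg] := ih _ hu (ltnW hs) hab'.
exists c => // j'; rewrite inE => /orP [/eqP -> | hj']; last by apply: hcg.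
exact: hn.
Qed.

Lemma avoid (I : eqType) (psi : I -> S -> K) (P : S -> Prop) (l : seq I) :
  P 0 -> (forall a b, P a -> P b -> P (a + b)) -> (forall (c : F) a, P a -> P (c *: a)) ->
  (forall i a b, psi i (a + b) = psi i a + psi i b) ->
  (forall i c a, psi i (c *: a) = iota c * psi i a) ->
  (forall i, i \in l -> exists w, P w /\ psi i w != 0) ->
  exists x, P x /\ forall i, i \in l -> psi i x != 0.
Proof.
move=> P0 PD PZ psiD psiZ; elim: l => [|i l ih] hl.
  by exists 0; split.
have [x [Px hx]] : exists x, P x /\ forall j, j \in l -> psi j x != 0.
  by apply: ih => j hj; apply: hl; rewrite inE hj orbT.
case: (eqVneq (psi i x) 0) => hix; last first.
  by exists x; split => // j; rewrite inE => /orP [/eqP -> | /hx].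
have [w [Pw hw]] := hl i (mem_head _ _).
have [L [hu hs]] := big_list (size l).+2.
have hgs : (size (i :: l) < size L)%N by rewrite hs.
have hab : forall j, j \in i :: l -> (psi j x != 0) || (psi j w != 0).
  by move=> j; rewrite inE => /orP [/eqP -> | /hx -> //]; rewrite hw orbT.
have [c _ hc] := pick_good hu hgs hab.
exists (x + c *: w); split; first by apply: PD => //; apply: PZ.
by move=> j hj; rewrite psiD psiZ; apply: hc.
Qed.

End Gen2.

Section Etale.
Variables (F : fieldType) (S : falgType F).
Hypothesis Hc : forall a b : S, a * b = b * a.
Variables (K : fieldType) (iota : {rmorphism F -> K}) (phi : 'I_(\dim {:S}) -> S -> K).
Hypothesis Hphi : forall i, falg_hom iota (phi i).
Hypothesis Hdet : \det (\matrix_(i, j) phi i (vbasis {:S})`_j) != 0.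

Local Notation m := (\dim {:S}).
Local Notation M := (\matrix_(i, j) phi i (vbasis {:S})`_j).
Local Notation e := (vbasis {:S}).

Lemma phiD i a b : phi i (a + b) = phi i a + phi i b.
Proof. by case: (Hphi i). Qed.
Lemma phiM i a b : phi i (a * b) = phi i a * phi i b.
Proof. by case: (Hphi i). Qed.
Lemma phi1 i : phi i 1 = 1.
Proof. by case: (Hphi i). Qed.
Lemma phiZ i c a : phi i (c *: a) = iota c * phi i a.
Proof. by case: (Hphi i). Qed.
Lemma phi0 i : phi i 0 = 0.
Proof. by have := phiZ i 0 0; rewrite scale0r rmorph0 mul0r. Qed.
Lemma phiN i a : phi i (- a) = - phi i a.
Proof. by rewrite -scaleN1r phiZ rmorphN1 mulN1r. Qed.
Lemma phiB i a b : phi i (a - b) = phi i a - phi i b.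
Proof. by rewrite phiD phiN. Qed.
Lemma phi_sum i (I : Type) (r : seq I) (P : pred I) (G : I -> S) :
  phi i (\sum_(j <- r | P j) G j) = \sum_(j <- r | P j) phi i (G j).
Proof. exact: (big_morph (phi i) (phiD i) (phi0 i)). Qed.
Lemma phiX i a k : phi i (a ^+ k) = phi i a ^+ k.
Proof. by elim: k => [|k ih]; rewrite ?expr0 ?phi1 // !exprS phiM ih. Qed.

Lemma phi_expand i s :
  phi i s = \sum_j iota (coord e j s) * M i j.
Proof.
rewrite {1}(coord_vbasis (memvf s)) phi_sum; apply: eq_bigr => j _.
by rewrite phiZ mxE.
Qed.

Lemma M_unit : M \in unitmx.
Proof. by rewrite unitmxE unitfE. Qed.

Lemma phi_inj s : (forall i, phi i s = 0) -> s = 0.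
Proof.
move=> hs; pose cv : 'cV_m := \col_j iota (coord e j s).
have hM : M *m cv = 0.
  apply/colP => i; rewrite !mxE -[RHS](hs i) phi_expand; apply: eq_bigr => j _; by rewrite /cv !mxE mulrC.
have hcv : cv = 0 by rewrite -(mulKmx M_unit cv) hM mulmx0.
rewrite (coord_vbasis (memvf s)) big1 // => j _.
have := congr1 (fun A : 'cV_m => A j 0) hcv; rewrite !mxE => /eqP.
by rewrite fmorph_eq0 => /eqP ->; rewrite scale0r.
Qed.

Lemma phi_neq i j : i != j -> exists s, phi i s != phi j s.
Proof.
move=> hij; have : [exists k : 'I_m, M i k != M j k].
  apply: contraT; rewrite negb_exists => /forallP hall.
  have := Hdet; rewrite (determinant_alternate hij) ?eqxx // => k.
  by have := hall k; rewrite negbK => /eqP.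
by case/existsP => k; rewrite !mxE => hk; exists e`_k.
Qed.

Lemma trace_phi s : iota (trace_alg s) = \sum_k phi k s.
Proof.
pose A : 'M[K]_m := \matrix_(l, i) iota (coord e l (s * e`_i)).
pose D : 'M[K]_m := diag_mx (\row_k phi k s).
have hMA : M *m A = D *m M.
  apply/matrixP => k i; rewrite mul_diag_mx !mxE -phiM phi_expand.
  by apply: eq_bigr => l _; rewrite !mxE mulrC.
have hA : A = invmx M *m (D *m M) by rewrite -hMA mulKmx ?M_unit.
have : \tr A = \tr D.
  by rewrite hA mxtrace_mulC -mulmxA mulmxV ?M_unit // mulmx1.
rewrite mxtrace_diag => htr; rewrite /trace_alg rmorph_sum /=.
transitivity (\tr A); first by apply: eq_bigr => i _; rewrite /A mxE.
by rewrite htr; apply: eq_bigr => i _; rewrite mxE.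
Qed.

Lemma trace_lin (a : F) (s t : S) : trace_alg (a *: s + t) = a * trace_alg s + trace_alg t.
Proof.
apply: (fmorph_inj iota); rewrite rmorphD rmorphM /= !trace_phi mulr_sumr -big_split /=.
by apply: eq_bigr => k _; rewrite phiD phiZ.
Qed.

Lemma trace_sum (I : Type) (r : seq I) (c : I -> F) (G : I -> S) :
  trace_alg (\sum_(j <- r) c j *: G j) = \sum_(j <- r) c j * trace_alg (G j).
Proof.
elim: r => [|x r ih]; rewrite ?big_nil ?big_cons.
  by apply: (fmorph_inj iota); rewrite trace_phi rmorph0 big1 // => k _; exact: phi0.
by rewrite trace_lin ih.
Qed.

Definition Gram (b : 'I_m -> S) : 'M[F]_m := \matrix_(i, j) trace_alg (b i * b j).
Definition Qm (b : 'I_m -> S) : 'M[F]_m := \matrix_(i, l) coord e l (b i).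

Lemma Gram_iota (b : 'I_m -> S) :
  iota (\det (Gram b)) = (\det M * iota (\det (Qm b))) ^+ 2.
Proof.
pose V : 'M[K]_m := \matrix_(k, i) phi k (b i).
have hV : V = M *m (map_mx iota (Qm b))^T.
  apply/matrixP => k i; rewrite !mxE phi_expand; apply: eq_bigr => l _.
  by rewrite !mxE mulrC.
have hG : map_mx iota (Gram b) = V^T *m V.
  apply/matrixP => i j; rewrite !mxE trace_phi; apply: eq_bigr => k _.
  by rewrite !mxE phiM.
rewrite -det_map_mx hG det_mulmx det_tr hV det_mulmx det_tr det_map_mx.
by rewrite expr2.
Qed.

Lemma trace_disc_iota : iota (trace_disc S) = (\det M) ^+ 2.
Proof.
have -> : trace_disc S = \det (Gram (fun i => e`_i)) by [].
rewrite Gram_iota; have -> : Qm (fun i => e`_i) = 1%:M.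
  apply/matrixP => i l; rewrite !mxE coord_free //; exact: (basis_free (vbasisP _)).
by rewrite det1 rmorph1 mulr1.
Qed.

Lemma trace_disc_neq0 : trace_disc S != 0.
Proof.
by rewrite -(fmorph_eq0 iota) trace_disc_iota expf_neq0.
Qed.

Lemma Gram_det (b : 'I_m -> S) :
  trace_disc S * (\det (Qm b)) ^+ 2 = \det (Gram b).
Proof.
apply: (fmorph_inj iota); rewrite Gram_iota rmorphM rmorphXn /= trace_disc_iota.
by rewrite exprMn.
Qed.

Lemma Qm_neq0 (b : 'I_m -> S) : indep b -> \det (Qm b) != 0.
Proof.
move=> hb; apply/det0P => -[v vn0 hv]; move/negP: vn0; apply.
apply/eqP/rowP => i; rewrite mxE; apply: (hb (fun i => v 0 i)) => //.
rewrite (coord_vbasis (memvf (\sum_i0 v 0 i0 *: b i0))) big1 // => l _.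
have h : \sum_j v 0 j * coord e l (b j) = 0.
  have := congr1 (fun A : 'rV_m => A 0 l) hv; rewrite !mxE => hl; rewrite -[RHS]hl.
  by apply: eq_bigr => j _; rewrite /Qm mxE.
rewrite linear_sum /= (eq_bigr (fun j => v 0 j * coord e l (b j))).
  by rewrite h scale0r.
by move=> j _; rewrite linearZ.
Qed.

Lemma vander_indep (y : S) : (forall k l, k != l -> phi k y != phi l y) ->
  indep (fun j : 'I_m => y ^+ j).
Proof.
move=> hy c hc.
pose a : 'rV[K]_m := \row_k phi k y.
pose r : 'rV[K]_m := \row_j iota (c j).
have hr : r *m Vandermonde m a = 0.
  apply/rowP => k; rewrite !mxE; transitivity (phi k (\sum_j c j *: y ^+ j)); last by rewrite hc phi0.
  rewrite phi_sum; apply: eq_bigr => j _.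
  by rewrite !mxE phiZ phiX.
have hdet : \det (Vandermonde m a) != 0.
  rewrite det_Vandermonde; apply/prodf_neq0 => i _; apply/prodf_neq0 => j hij.
  rewrite !mxE subr_eq0; apply: hy; by rewrite neq_ltn hij orbT.
have r0 : r = 0.
  apply/eqP; apply: contraNT hdet => rn0; apply/det0P; by exists r.
move=> j; have := congr1 (fun A : 'rV_m => A 0 j) r0; rewrite !mxE.
by move/eqP; rewrite fmorph_eq0 => /eqP.
Qed.


Lemma phi_aeval k (p : {poly F}) (y : S) :
  phi k (aeval p y) = (map_poly iota p).[phi k y].
Proof.
rewrite (aeval_wide (N := size p)) // phi_sum horner_coef size_map_poly.
by apply: eq_bigr => i _; rewrite phiZ phiX coef_map.
Qed.

Lemma det_cast N d (H : N = (d + d)%N) (X : 'M[F]_N) :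
  \det X = \det (castmx (H, H) X).
Proof. by subst N; rewrite castmx_id. Qed.

Section Part3.
Hypothesis H2 : (2%:R : F) != 0.
Variables (f : {poly F}) (y : S).
Hypothesis Hmon : f \is monic.
Local Notation d := (size f).-1.
Hypothesis Hsz : m = (d + d)%N.
Local Notation h := (f \Po 'X^2).
Hypothesis Hker : forall p, aeval p y = 0 <-> h %| p.
Hypothesis Hsurj : forall s, exists p, aeval p y = s.

Local Notation alpha := (fun k => phi k y).

Lemma alpha_inj : injective alpha.
Proof.
move=> k l /= hkl; apply/eqP; apply: contraT => hne.
have [s /eqP hs] := phi_neq hne; exfalso; apply: hs.
by have [p <-] := Hsurj s; rewrite !phi_aeval hkl.
Qed.

Lemma f_neq0 : f != 0.
Proof. exact: monic_neq0. Qed.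

Lemma h_coef : h`_(d * 2) = 1.
Proof.
rewrite coef_comp_poly_Xn // dvdn_mull // mulnK //.
by move/monicP: Hmon; rewrite lead_coefE.
Qed.

Lemma h_neq0 : h != 0.
Proof. by apply/eqP => h0; have := h_coef; rewrite h0 coef0 => /eqP; rewrite eq_sym oner_eq0. Qed.

Lemma size_h : size h = (d * 2).+1.
Proof.
have := size_comp_poly f 'X^2; rewrite size_polyXn /= => <-.
by rewrite prednK // size_poly_gt0 h_neq0.
Qed.

Lemma hK_root k : root (map_poly iota h) (alpha k).
Proof.
apply/eqP; rewrite /= -phi_aeval.
have -> : aeval h y = 0 by apply/Hker; exact: dvdpp.
by rewrite phi0.
Qed.

Lemma hK_rootN k : root (map_poly iota h) (- alpha k).
Proof.
have := hK_root k; rewrite /root map_comp_poly map_polyXn !horner_comp !hornerXn.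
by rewrite sqrrN.
Qed.

Lemma alpha_neg k : exists l, alpha l = - alpha k.
Proof.
case: (boolP (- alpha k \in map alpha (enum 'I_m))) => [/mapP [l _ hl] | hn].
  by exists l.
exfalso.
have hu : uniq (- alpha k :: map alpha (enum 'I_m)).
  by rewrite /= hn map_inj_uniq ?enum_uniq //; exact: alpha_inj.
have hr : all (root (map_poly iota h)) (- alpha k :: map alpha (enum 'I_m)).
  rewrite /= hK_rootN; apply/allP => x /mapP [l _ ->]; exact: hK_root.
have := max_poly_roots _ hr hu.
rewrite map_poly_eq0 h_neq0 size_map_poly size_h /= size_map size_enum_ord.
by rewrite Hsz muln2 addnn ltnn => /(_ isT).
Qed.

Lemma two_K : (2%:R : K) != 0.
Proof. by rewrite -(rmorph_nat iota) fmorph_eq0. Qed.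

Lemma sum_odd r : odd r -> \sum_k alpha k ^+ r = 0.
Proof.
move=> hr.
pose pi k := odflt k [pick l | alpha l == - alpha k].
have hpi k : alpha (pi k) = - alpha k.
  rewrite /pi; case: pickP => [l /eqP //|] /= hn.
  by have [l hl] := alpha_neg k; move: (hn l); rewrite hl eqxx.
have pinj : injective pi.
  by move=> k l hkl; apply: alpha_inj; apply: oppr_inj; rewrite -!hpi hkl.
have hs : \sum_k alpha k ^+ r = - \sum_k alpha k ^+ r.
  rewrite [LHS](reindex_inj pinj) -sumrN; apply: eq_bigr => k _.
  by rewrite hpi exprNn -signr_odd hr mulN1r.
move/eqP: hs; rewrite -subr_eq0 opprK -mulr2n -mulr_natr mulf_eq0.
by rewrite (negPf two_K) orbF => /eqP.
Qed.

Lemma trace_odd r : odd r -> trace_alg (y ^+ r) = 0.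
Proof.
move=> hr; apply: (fmorph_inj iota); rewrite trace_phi rmorph0 -[RHS](sum_odd hr).
by apply: eq_bigr => k _; rewrite phiX.
Qed.

Definition ex (j : nat) := if (j < d)%N then j.*2 else (j - d).*2.+1.

Lemma ex_lt (j : 'I_m) : (ex j < d.*2)%N.
Proof.
have := ltn_ord j; rewrite {2}Hsz /ex -!addnn; case: ifP => hj hjm; lia.
Qed.

Lemma ex_inj : injective (fun j : 'I_m => ex j).
Proof.
move=> j k /=; rewrite /ex => hjk; apply/val_inj => /=.
move: hjk; case: ifP => hj; case: ifP => hk; rewrite -!addnn; lia.
Qed.

Definition bfam (j : 'I_m) := y ^+ ex j.

Lemma y_nokill : nokill y d.*2.
Proof.
move=> P hP hz; apply/eqP; apply: contraT => hP0.
have := dvdp_leq hP0 ((Hker P).1 hz); rewrite size_h muln2 leqNgt.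
by rewrite (leq_ltn_trans hP).
Qed.

Lemma bfam_indep : indep bfam.
Proof. exact: (nokill_indep y_nokill ex_inj ex_lt). Qed.

Definition Am : 'M[F]_d := \matrix_(p, q) trace_alg (y ^+ (p.*2 + q.*2)).
Definition Bm : 'M[F]_d := \matrix_(p, q) trace_alg (y ^+ (p.*2.+1 + q.*2.+1)).

Lemma Gram_block : castmx (Hsz, Hsz) (Gram bfam) = block_mx Am 0 0 Bm.
Proof.
apply/matrixP => i j; rewrite castmxE /Gram mxE /bfam -exprD.
rewrite -[i]splitK -[j]splitK; case: (split i) => p; case: (split j) => q.
all: rewrite /= ?(block_mxEul, block_mxEur, block_mxEdl, block_mxEdr) !mxE /ex /=.
all: rewrite ?ltn_ord ?[(_ + _ < _)%N]ltnNge ?leq_addr ?addKn //=.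
all: by apply: trace_odd; rewrite oddD /= !odd_double.
Qed.


Lemma size_f : size f = d.+1.
Proof. by rewrite prednK // size_poly_gt0 f_neq0. Qed.

Lemma y2d : y ^+ d.*2 = - \sum_(l < d) f`_l *: y ^+ l.*2.
Proof.
have hz : aeval f (y ^+ 2) = 0.
  by rewrite -aevalXn -aeval_comp; apply/Hker; exact: dvdpp.
move: hz; rewrite (aeval_wide (N := d.+1)); last by rewrite size_f.
rewrite big_ord_recr /=.
have -> : f`_d = 1 by move/monicP: Hmon; rewrite lead_coefE.
rewrite scale1r addrC => /eqP; rewrite addr_eq0 => /eqP.
rewrite -exprM mul2n => ->; congr (- _); apply: eq_bigr => l _.
by rewrite -exprM mul2n.
Qed.

Lemma Bm_comp : Bm = companionmx f *m Am.
Proof.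
apply/matrixP => p q; rewrite !mxE.
under eq_bigr do rewrite [companionmx _ _ _]mxE [Am _ _]mxE.
have dpos : (0 < d)%N := leq_ltn_trans (leq0n p) (ltn_ord p).
case: (eqVneq (p : nat) d.-1) => hp.
  rewrite -trace_sum; congr trace_alg.
  have -> : (p.*2.+1 + q.*2.+1 = d.*2 + q.*2)%N.
    by rewrite hp -!addnn; lia.
  rewrite exprD y2d mulNr mulr_suml -sumrN; apply: eq_bigr => l _.
  by rewrite -scalerAl -exprD scaleNr.
have hp1 : (p.+1 < d)%N.
  by move: hp (ltn_ord p); lia.
rewrite (bigD1 (Ordinal hp1)) //= eqxx mul1r big1 ?addr0.
  by congr trace_alg; congr (y ^+ _); rewrite -!addnn; lia.
move=> l hl; have /negbTE -> : (p.+1 != l :> nat) by apply: contra hl => /eqP hl; apply/eqP/val_inj; rewrite /= hl.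
by rewrite mul0r.
Qed.

Lemma det_companion : \det (companionmx f) = (-1) ^+ d * f`_0.
Proof.
have := char_poly_det (companionmx f); rewrite companionmxK // => ->.
by rewrite mulrA -exprMn mulrNN mulr1 expr1n mul1r.
Qed.


Lemma part3_main : trivial_discriminant S <-> exists c, (-1) ^+ d * f`_0 = c ^+ 2.
Proof.
pose q := \det (Qm bfam).
have hq : q != 0 := Qm_neq0 bfam_indep.
have htd : trace_disc S != 0 := trace_disc_neq0.
have key : trace_disc S * q ^+ 2 = \det Am ^+ 2 * ((-1) ^+ d * f`_0).
  rewrite Gram_det (det_cast Hsz) Gram_block det_ublock Bm_comp det_mulmx.
  by rewrite det_companion mulrCA -expr2 mulrC.
have hA : \det Am != 0.
  apply/eqP => hA0; move: key; rewrite hA0 expr0n /= mul0r => /eqP.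
  by rewrite mulf_eq0 (negPf htd) /= expf_eq0 (negPf hq) andbF.
split => [[c hc] | [c hc]].
  exists (c * q / \det Am); rewrite expr_div_n exprMn -hc key.
  by rewrite mulrAC divff ?mul1r // expf_neq0.
exists (\det Am * c / q); apply: (mulIf (expf_neq0 2 hq)).
by rewrite key expr_div_n exprMn hc divfK // expf_neq0.
Qed.

End Part3.

Section Inv.
Variable sigma : 'AEnd(S).
Hypothesis Hinv : involution sigma.
Hypothesis H2 : (2%:R : F) != 0.

Lemma sig2 s : sigma (sigma s) = s.
Proof. by case: Hinv. Qed.
Lemma sigM a b : sigma (a * b) = sigma a * sigma b.
Proof. exact: rmorphM. Qed.
Lemma sig1 : sigma 1 = 1.
Proof. exact: rmorph1. Qed.
Lemma sigD a b : sigma (a + b) = sigma a + sigma b.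
Proof. exact: linearD. Qed.
Lemma sigZ (c : F) a : sigma (c *: a) = c *: sigma a.
Proof. exact: linearZ. Qed.
Lemma sigN a : sigma (- a) = - sigma a.
Proof. exact: linearN. Qed.
Lemma sigB a b : sigma (a - b) = sigma a - sigma b.
Proof. exact: linearB. Qed.
Lemma sig0 : sigma 0 = 0.
Proof. exact: linear0. Qed.

Local Notation half := ((2%:R : F)^-1).
Definition pr0 s := half *: (s + sigma s).
Definition pr1 s := half *: (s - sigma s).

Lemma pr_dec s : s = pr0 s + pr1 s.
Proof.
rewrite /pr0 /pr1 -scalerDr addrACA subrr addr0 -mulr2n -scaler_nat.
by rewrite scalerA mulVf // scale1r.
Qed.

Lemma sig_pr0 s : sigma (pr0 s) = pr0 s.
Proof. by rewrite /pr0 sigZ sigD sig2 addrC. Qed.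

Lemma sig_pr1 s : sigma (pr1 s) = - pr1 s.
Proof. by rewrite /pr1 sigZ sigB sig2 -scalerN opprB. Qed.

Lemma pr0_fix s : sigma s = s -> pr0 s = s.
Proof.
by move=> hs; rewrite /pr0 hs -mulr2n -scaler_nat scalerA mulVf // scale1r.
Qed.

Lemma pr1_anti s : sigma s = - s -> pr1 s = s.
Proof.
by move=> hs; rewrite /pr1 hs opprK -mulr2n -scaler_nat scalerA mulVf // scale1r.
Qed.

Lemma pr0_anti s : sigma s = - s -> pr0 s = 0.
Proof. by move=> hs; rewrite /pr0 hs subrr scaler0. Qed.

Lemma pr1_fix s : sigma s = s -> pr1 s = 0.
Proof. by move=> hs; rewrite /pr1 hs subrr scaler0. Qed.

Lemma pr0_lin (a b : S) s t : sigma a = a -> sigma b = b ->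
  pr0 (a * s + b * t) = a * pr0 s + b * pr0 t.
Proof.
move=> ha hb; rewrite /pr0 sigD !sigM ha hb -!scalerAr -scalerDr; congr (_ *: _).
by rewrite !mulrDr addrACA.
Qed.

Lemma pr1_lin (a b : S) s t : sigma a = a -> sigma b = b ->
  pr1 (a * s + b * t) = a * pr1 s + b * pr1 t.
Proof.
move=> ha hb; rewrite /pr1 sigD !sigM ha hb -!scalerAr -scalerDr; congr (_ *: _).
rewrite !mulrBr opprD addrACA //.
Qed.

Lemma fixP s : reflect (sigma s = s) (s \in fixedSpace sigma).
Proof. exact: fixedSpaceP. Qed.

Lemma pr0D s s' : pr0 (s + s') = pr0 s + pr0 s'.
Proof. by rewrite /pr0 sigD -scalerDr addrACA. Qed.
Lemma pr1D s s' : pr1 (s + s') = pr1 s + pr1 s'.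
Proof. by rewrite /pr1 sigD -scalerDr opprD addrACA. Qed.
Lemma pr0_0 : pr0 0 = 0.
Proof. by rewrite /pr0 sig0 addr0 scaler0. Qed.
Lemma pr1_0 : pr1 0 = 0.
Proof. by rewrite /pr1 sig0 subr0 scaler0. Qed.

Lemma reduced (z : S) : z * z = 0 -> z = 0.
Proof.
move=> hz; apply: phi_inj => k; apply/eqP.
by rewrite -[_ == 0]orbb -mulf_eq0 -phiM hz phi0.
Qed.

Section T.
HB.instance Definition _ := GRing.PzRing_hasCommutativeMul.Build S Hc.

Variables u v : S.
Hypothesis hsp : forall s, exists a b, [/\ sigma a = a, sigma b = b & s = a * u + b * v].
Hypothesis hun : forall a b, sigma a = a -> sigma b = b -> a * u + b * v = 0 -> a = 0 /\ b = 0.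

Local Notation u0 := (pr0 u).
Local Notation u1 := (pr1 u).
Local Notation v0 := (pr0 v).
Local Notation v1 := (pr1 v).

Lemma ab1 : exists a b, [/\ sigma a = a, sigma b = b & a * u0 + b * v0 = 1].
Proof.
have [a [b [ha hb h]]] := hsp 1; exists a, b; split => //.
by rewrite -pr0_lin // -h pr0_fix // sig1.
Qed.

Definition tt := u0 * v1 - v0 * u1.

Lemma sig_tt : sigma tt = - tt.
Proof. by rewrite /tt sigB !sigM !sig_pr0 !sig_pr1 !mulrN opprK opprD opprK addrC. Qed.

Lemma tt_reg s : tt * s = 0 -> s = 0.
Proof.
move=> hts.
have [a [b [ha hb h1]]] := ab1.
set p := pr0 s; set w := pr1 s.
have hp : sigma p = p by rewrite sig_pr0.
have hws : sigma w = - w by rewrite sig_pr1.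
have [x [y [hx hy hw]]] := hsp w.
have hw0 : x * u0 + y * v0 = 0 by rewrite -pr0_lin // -hw pr0_anti.
have hw1 : w = x * u1 + y * v1 by rewrite -pr1_lin // -hw pr1_anti.
pose c := a * y - b * x.
have hc : sigma c = c by rewrite /c sigB !sigM ha hb hx hy.
have hwc : w = c * tt.
  apply/eqP; rewrite -subr_eq0 hw1.
  have -> : x * u1 + y * v1 - c * tt =
    (y * v1 + x * u1) * (1 - (a * u0 + b * v0)) + (b * v1 + a * u1) * (x * u0 + y * v0).
    by rewrite /c /tt; ring.
  by rewrite h1 hw0 subrr !mulr0 addr0.
have hts2 : tt * s = tt * p + c * (tt * tt).
  by rewrite {1}(pr_dec s) -/p -/w hwc; ring.
have hsa : sigma (tt * p) = - (tt * p) by rewrite sigM sig_tt hp mulNr.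
have hsf : sigma (c * (tt * tt)) = c * (tt * tt) by rewrite !sigM sig_tt hc mulrNN.
have hct : c * (tt * tt) = 0.
  by have := congr1 pr0 hts; rewrite hts2 pr0D pr0_anti // add0r pr0_fix // pr0_0.
have htp : tt * p = 0.
  by have := congr1 pr1 hts; rewrite hts2 pr1D pr1_anti // pr1_fix // addr0 pr1_0.
have hw' : w = 0.
  rewrite hwc; apply: reduced.
  have -> : c * tt * (c * tt) = c * (c * (tt * tt)) by ring.
  by rewrite hct mulr0.
have hpu : (- (p * v0)) * u + (p * u0) * v = 0.
  transitivity (- (p * v0) * (u0 + u1) + p * u0 * (v0 + v1)).
    by rewrite -!pr_dec.
  have -> : - (p * v0) * (u0 + u1) + p * u0 * (v0 + v1) = p * tt by rewrite /tt; ring.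
  by rewrite mulrC htp.
have hs1 : sigma (- (p * v0)) = - (p * v0) by rewrite sigN sigM hp sig_pr0.
have hs2 : sigma (p * u0) = p * u0 by rewrite sigM hp sig_pr0.
have [h1' h2'] := hun hs1 hs2 hpu.
have hp0 : p = 0.
  have -> : p = p * (a * u0 + b * v0) by rewrite h1 mulr1.
  have -> : p * (a * u0 + b * v0) = a * (p * u0) - b * (- (p * v0)) by ring.
  by rewrite h1' h2' !mulr0 subr0.
by rewrite (pr_dec s) -/p -/w hp0 hw' addr0.
Qed.

Lemma tt_unit : exists s, tt * s = 1.
Proof.
have := lreg_unit Hc tt_reg => /unitrP [s [_ h]]; by exists s.
Qed.

Lemma phi_tt k : phi k tt != 0.
Proof.
have [s hs] := tt_unit; apply/eqP => h0.
by have := congr1 (phi k) hs; rewrite phiM h0 mul0r phi1 => /eqP; rewrite eq_sym oner_eq0.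
Qed.

Lemma sep k l : k != l -> exists w, sigma w = - w /\ phi k w != phi l w.
Proof.
move=> hkl.
case: (eqVneq (phi k tt) (phi l tt)) => htt; last by exists tt; rewrite sig_tt.
have [s hs] := phi_neq hkl.
case: (eqVneq (phi k (pr1 s)) (phi l (pr1 s))) => h1; last by exists (pr1 s); rewrite sig_pr1.
exists (pr0 s * tt); split; first by rewrite sigM sig_pr0 sig_tt mulrN.
rewrite !phiM htt; apply: contra hs => /eqP h.
have h0 : phi k (pr0 s) = phi l (pr0 s).
  by apply: (mulIf (phi_tt l)); rewrite h.
by rewrite (pr_dec s) !phiD h0 h1.
Qed.

Hypothesis Hinf : forall s : seq F, exists x : F, x \notin s.

Lemma exists_x : exists x, [/\ sigma x = - x, forall k, phi k x != 0 &
  forall k l, k != l -> phi k x != phi l x].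
Proof.
pose psi (kl : 'I_m * 'I_m) (w : S) :=
  if kl.1 == kl.2 then phi kl.1 w else phi kl.1 w - phi kl.2 w.
have [x [hx hpsi]] : exists x, sigma x = - x /\
    forall i, i \in enum {: 'I_m * 'I_m} -> psi i x != 0.
  apply: (avoid Hinf).
  - by rewrite sig0 oppr0.
  - by move=> a b ha hb; rewrite sigD ha hb opprD.
  - by move=> c a ha; rewrite sigZ ha scalerN.
  - by move=> [k l] a b; rewrite /psi /=; case: eqP => _; rewrite !phiD // opprD addrACA.
  - by move=> [k l] c a; rewrite /psi /=; case: eqP => _; rewrite !phiZ // mulrBr.
  move=> [k l] _; rewrite /psi /=; case: eqVneq => hkl.
    by exists tt; rewrite sig_tt phi_tt.
  by have [w [hw hne]] := sep hkl; exists w; rewrite subr_eq0.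
exists x; split => //.
  by move=> k; have := hpsi (k, k); rewrite mem_enum /psi /= eqxx; apply.
move=> k l hkl; have := hpsi (k, l); rewrite mem_enum /psi /= (negPf hkl) subr_eq0.
by apply.
Qed.


Section X.
Variable n : nat.
Hypothesis Hdim : m = (2 * n)%N.
Variable x : S.
Hypothesis hxa : sigma x = - x.
Hypothesis hxnz : forall k, phi k x != 0.
Hypothesis hxd : forall k l, k != l -> phi k x != phi l x.

Local Notation S0 := (fixedSpace sigma).
Local Notation z := (x ^+ 2).

Lemma x_unit : x \is a GRing.unit.
Proof.
apply: (lreg_unit Hc) => s hs; apply: phi_inj => k.
have := congr1 (phi k) hs; rewrite phiM phi0 => /eqP; rewrite mulf_eq0 (negPf (hxnz k)).
by move/eqP.
Qed.

Lemma x_nokill : nokill x n.*2.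
Proof. by have := indep_nokill (vander_indep hxd); rewrite Hdim mul2n. Qed.

Lemma z_nokill : nokill z n.
Proof. exact: nokill_sq x_nokill. Qed.

Lemma z_indep : indep (fun i : 'I_n => z ^+ i).
Proof. exact: (nokill_indep z_nokill (g := @nat_of_ord n) (@ord_inj n) (@ltn_ord n)). Qed.

Lemma one_S0 : (1 : S) \in S0.
Proof. by apply/fixP; exact: sig1. Qed.

Lemma z_in : z \in S0.
Proof. by apply/fixP; rewrite rmorphXn /= hxa sqrrN. Qed.

Lemma zpow_in i : z ^+ i \in S0.
Proof. exact: (memv_X (A := fixedSpace_aspace sigma) _ one_S0 z_in). Qed.

Lemma dim_S0 : (\dim S0 <= n)%N.
Proof.
have hd : (S0 :&: (S0 * <[x]>) = 0)%VS.
  apply/eqP; rewrite -subv0; apply/subvP => w; rewrite memv_cap => /andP [/fixP hw1].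
  case/memv_cosetP => a /fixP ha hw; rewrite memv0.
  have : sigma w = - w by rewrite hw sigM ha hxa mulrN.
  rewrite hw1 => /eqP; rewrite -subr_eq0 opprK -mulr2n -scaler_nat scaler_eq0.
  by rewrite (negPf H2).
have := dimv_disjoint_sum hd; rewrite dim_cosetv_unit ?x_unit // => hds.
have := dimvS (subvf (S0 + S0 * <[x]>)%VS); rewrite hds Hdim addnn -mul2n.
by rewrite leq_mul2l.
Qed.

Lemma agenv1 : agenv <[x]>%VS = fullv.
Proof.
apply/eqP; rewrite eqEdim subvf /=.
apply: (indep_dim (b := fun j : 'I_m => x ^+ j)) (vander_indep hxd) => j.
apply: (memv_X (A := agenv_aspace <[x]>%VS)).
  by apply: (subvP (sub1_agenv _)); exact: memv_line.
by apply: (subvP (sub_agenv _)); exact: memv_line.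
Qed.

Lemma agenv2 : agenv <[z]>%VS = S0.
Proof.
have hsub : (agenv <[z]> <= S0)%VS.
  apply: agenv_sub_modl; first by rewrite -memvE one_S0.
  apply/prodvP => a b /vlineP [k ->] hb.
  by apply: memvM => //; rewrite memvZ // z_in.
apply/eqP; rewrite eqEdim hsub /=; apply: leq_trans dim_S0 _.
apply: (indep_dim (b := fun i : 'I_n => z ^+ i)) z_indep => j.
apply: (memv_X (A := agenv_aspace <[z]>%VS)).
  by apply: (subvP (sub1_agenv _)); exact: memv_line.
by apply: (subvP (sub_agenv _)); exact: memv_line.
Qed.

Lemma S0_span s : s \in S0 -> exists c : 'I_n -> F, s = \sum_i c i *: z ^+ i.
Proof. exact: (indep_span (fun i => zpow_in i) dim_S0 z_indep). Qed.

Lemma x_span s : exists c : 'I_m -> F, s = \sum_i c i *: x ^+ i.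
Proof. exact: (indep_span (U := fullv) (fun i => memvf _) (leqnn _) (vander_indep hxd) (memvf s)). Qed.

Lemma part2 : exists f : {poly F}, [/\ f \is monic, size f = n.+1,
  iso_poly_quot S0 f & iso_poly_quot (fullv : {vspace S}) (f \Po 'X^2)].
Proof.
have [dc hdc] := S0_span (zpow_in n).
pose g : {poly F} := \sum_i dc i *: 'X^(@nat_of_ord n i).
have hg : (size g <= n)%N := size_sumXn dc (@ltn_ord n).
have hgs : (size (- g) < size ('X^n : {poly F}))%N by rewrite size_polyN size_polyXn ltnS.
pose f := 'X^n - g.
have fsz : size f = n.+1 by rewrite /f size_polyDl // size_polyXn.
have fmon : f \is monic by rewrite monicE /f lead_coefDl // lead_coefXn.
have fz : aeval f z = 0.
  by rewrite /f aeval_alg rmorphB /= -!aeval_alg aevalXn aeval_sumXn -hdc subrr.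
have f0 : f != 0 by apply: monic_neq0.
exists f; split => //.
  exists z; split; first exact: z_in.
    by apply: kernel_char => //; rewrite fsz; exact: z_nokill.
  move=> s /S0_span [c ->]; exists (\sum_i c i *: 'X^(@nat_of_ord n i)).
  exact: aeval_sumXn.
exists x; split; first exact: memvf.
  apply: kernel_char.
  - by rewrite -size_poly_eq0 size_comp_sq.
  - by rewrite aeval_comp aevalXn.
  - by rewrite size_comp_sq // fsz /= muln2; exact: x_nokill.
move=> s _; have [c ->] := x_span s; exists (\sum_i c i *: 'X^(@nat_of_ord m i)).
exact: aeval_sumXn.
Qed.

End X.
End T.
End Inv.
End Etale.

Theorem proposition7p1 (F : fieldType) (S : falgType F) (sigma : 'AEnd(S)) (n : nat) :
  (forall s : seq F, exists x : F, x \notin s) ->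
  2 \notin [pchar F] ->
  etale S ->
  involution sigma ->
  \dim {:S} = (2 * n)%N ->
  [/\ (exists x : S, [/\ x \is a GRing.unit,
                         agenv <[x]>%VS = (fullv : {vspace S}) &
                         agenv <[x ^+ 2]>%VS = fixedSpace sigma]),
      (exists f : {poly F}, [/\ f \is monic, size f = n.+1,
                               iso_poly_quot (fixedSpace sigma) f &
                               iso_poly_quot (fullv : {vspace S}) (f \Po 'X^2)]) &
      (forall f : {poly F}, f \is monic -> size f = n.+1 ->
          iso_poly_quot (fixedSpace sigma) f ->
          iso_poly_quot (fullv : {vspace S}) (f \Po 'X^2) ->
          (trivial_discriminant S <-> exists c : F, (-1) ^+ n * f`_0 = c ^+ 2))].
Proof.
move=> Hinf Hchar [Hc [K [iota [phi [Hphi Hdet]]]]] Hinv Hdim.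
have H2 : (2%:R : F) != 0.
  by apply: contraNneq Hchar => h; rewrite inE /= h eqxx.
have Hinv' := Hinv; case: Hinv' => _ _ [u [v [hsp hun]]].
have hsp' : forall s, exists a b, [/\ sigma a = a, sigma b = b & s = a * u + b * v].
  by move=> s; have [a [b [/fixedSpaceP ha /fixedSpaceP hb hs]]] := hsp s; exists a, b.
have hun' : forall a b, sigma a = a -> sigma b = b -> a * u + b * v = 0 -> a = 0 /\ b = 0.
  by move=> a b ha hb; apply: hun; apply/fixedSpaceP.
have [x [hxa hxnz hxd]] := exists_x Hc Hphi Hdet Hinv H2 hsp' hun' Hinf.
split.
- exists x; split.
  + exact: (x_unit Hc Hphi Hdet hxnz).
  + exact: (agenv1 Hphi hxd).
  + exact: (agenv2 Hc Hphi Hdet H2 Hdim hxa hxnz hxd).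
- exact: (part2 Hc Hphi Hdet H2 Hdim hxa hxnz hxd).
move=> f fmon fsz _ [y [_ hker hsurj]].
have Hsz : \dim {:S} = ((size f).-1 + (size f).-1)%N by rewrite Hdim fsz addnn mul2n.
have := part3_main Hphi Hdet H2 fmon Hsz hker (fun s => hsurj s (memvf s)).
by rewrite fsz.
Qed.
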